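(* Assume that for $i=0,1$ the matrix $(\mathbf{X}^i)^T\mathbf{W}^i\mathbf{X}^i$ is invertible. Then $S_{d,\mathbf{w}^\lambda}$ is the unique linear subdivision scheme whose rule producing $(S\mathbf{f})_{2j+i}$ has the form $\sum_{m\in M_i} a_m f_{j+(m+i)/2}$ ($i=0,1$), which reproduces $\Pi_d$, and whose sub-masks are of the form $\mathbf{a}^i=\mathbf{W}^i\mathbf{X}^i\boldsymbol{\alpha}^i$ for some $\boldsymbol{\alpha}^i\in\mathbb{R}^{d+1}$, $i=0,1$.
   Context: Let $\phi:[0,1]\to[0,1]$ be non-increasing with $\phi(0)=1$, $\omega(x)=\phi(|x|)$ for $|x|\le1$ and $0$ otherwise, $\lambda\in(0,\infty)\setminus\mathbb{N}$, and $w^\lambda_m=\omega(m/\lambda)$, $m\in\mathbb{Z}$. Let $d\ge0$ be an integer, $\Pi_d$ the real polynomials of degree at most $d$, and $A(x)=(1,x,\ldots,x^d)^T$. For $i\in\{0,1\}$ let $M_i=\{m\in\mathbb{Z}: m\equiv i\pmod 2,\ |m|<\lambda\}$, let $\mathbf{X}^i$ be the $|M_i|\times(d+1)$ matrix whose rows are $A(m)^T$, $m\in M_i$ in increasing order, and $\mathbf{W}^i$ the diagonal matrix with diagonal $(w^\lambda_m)_{m\in M_i}$. The weighted local polynomial regression (WLPR) scheme $S_{d,\mathbf{w}^\lambda}$ maps $\mathbf{f}=(f_j)_{j\in\mathbb{Z}}$ to $(S\mathbf{f})_{2j+i}=\hat p(0)$ ($i\in\{0,1\}$, $j\in\mathbb{Z}$),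 where $\hat p$ minimizes $\sum_{m\in M_i} w^\lambda_m(f_{j+(m+i)/2}-p(m))^2$ over $p\in\Pi_d$. Under the invertibility assumption the minimizer is unique and $(S\mathbf{f})_{2j+i}=\sum_{m\in M_i}a_m f_{j+(m+i)/2}$; the sub-masks are the column vectors $\mathbf{a}^i=(a_m)_{m\in M_i}$ (in increasing order of $m$). A linear scheme $S$ reproduces $\Pi_d$ if $S\{p(2j)\}_{j\in\mathbb{Z}}=\{p(j)\}_{j\in\mathbb{Z}}$ for every $p\in\Pi_d$. *)

(* Defs.v *)
From HB Require Import structures.
From mathcomp Require Import all_boot all_order all_algebra.
From mathcomp Require Import reals.
Set Implicit Arguments. Unset Strict Implicit. Unset Printing Implicit Defensive.
Import Order.TTheory GRing.Theory Num.Theory.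
Local Open Scope ring_scope.

Section WLPR.
Variable R : realType.

Definition omega (phi : R -> R) (x : R) : R :=
  if `|x| <= 1 then phi `|x| else 0.

Definition wl (phi : R -> R) (lam : R) (m : int) : R := omega phi (m%:~R / lam).

Definition cands (lam : R) : seq int :=
  [seq (k%:Z - (Num.truncn lam)%:Z)%R | k <- iota 0 (2 * Num.truncn lam).+1].

Definition Mset (lam : R) (i : bool) : seq int :=
  [seq m <- cands lam | ((m %% 2)%Z == (i : nat)%:Z) && (`|(m%:~R : R)| < lam)].

Definition Xmat (lam : R) (d : nat) (i : bool) : 'M[R]_(size (Mset lam i), d.+1) :=
  \matrix_(r, k) ((nth 0 (Mset lam i) r)%:~R ^+ k).

Definition Wmat (phi : R -> R) (lam : R) (i : bool) : 'M[R]_(size (Mset lam i)) :=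
  diag_mx (\row_r wl phi lam (nth 0 (Mset lam i) r)).

Definition rule (lam : R) (i : bool) (a : 'cV[R]_(size (Mset lam i)))
  (f : int -> R) (j : int) : R :=
  \sum_(r < size (Mset lam i))
     a r ord0 * f (j + ((nth 0 (Mset lam i) r + (i : nat)%:Z) %/ 2)%Z).

Definition subdiv (lam : R) (a0 : 'cV[R]_(size (Mset lam false)))
  (a1 : 'cV[R]_(size (Mset lam true))) (f : int -> R) (k : int) : R :=
  if (k %% 2)%Z == 0 then rule a0 f (k %/ 2)%Z else rule a1 f (k %/ 2)%Z.

Definition reproduces (lam : R) (d : nat) (a0 : 'cV[R]_(size (Mset lam false)))
  (a1 : 'cV[R]_(size (Mset lam true))) : Prop :=
  forall p : {poly R}, (size p <= d.+1)%N ->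
    forall k : int, subdiv a0 a1 (fun j => p.[(2 * j)%:~R]) k = p.[k%:~R].

Definition wlpr_obj (phi : R -> R) (lam : R) (i : bool) (f : int -> R) (j : int)
  (p : {poly R}) : R :=
  \sum_(m <- Mset lam i)
     wl phi lam m * (f (j + ((m + (i : nat)%:Z) %/ 2)%Z) - p.[m%:~R]) ^+ 2.

Definition wlpr_min (phi : R -> R) (lam : R) (d : nat) (i : bool) (f : int -> R)
  (j : int) (p : {poly R}) : Prop :=
  (size p <= d.+1)%N /\
  forall q : {poly R}, (size q <= d.+1)%N ->
    wlpr_obj phi lam i f j p <= wlpr_obj phi lam i f j q.

End WLPR.

(* Main.v *)
From mathcomp Require Import zify.
Require Import Defs.
From HB Require Import structures.
From mathcomp Require Import all_boot all_order all_algebra.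
From mathcomp Require Import reals.
From mathcomp Require Import ring.
Import Order.TTheory GRing.Theory Num.Theory.
Local Open Scope ring_scope.

Section LS.
Variables (R : realType) (n d : nat) (X : 'M[R]_(n, d.+1)) (w : 'I_n -> R).
Hypothesis w_ge0 : forall r, 0 <= w r.
Let W : 'M[R]_n := diag_mx (\row_r w r).
Let G := X^T *m W *m X.
Hypothesis HG : G \in unitmx.

Definition Qf (u : 'cV[R]_n) := \sum_r w r * u r 0 ^+ 2.
Definition cstar (F : 'cV[R]_n) := invmx G *m (X^T *m W *m F).
Definition e0 : 'cV[R]_d.+1 := delta_mx 0 0.
Definition amask := W *m X *m (invmx G *m e0).

Lemma Qf_ge0 u : 0 <= Qf u.
Proof. by apply: sumr_ge0 => r _; rewrite mulr_ge0 // sqr_ge0. Qed.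

Lemma normal_eq F : X^T *m W *m (F - X *m cstar F) = 0.
Proof.
by rewrite mulmxBr /cstar (mulmxA (X^T *m W) X) -/G mulKVmx // subrr.
Qed.

Lemma cross0 (u v : 'cV[R]_n) c : X^T *m W *m u = 0 -> v = X *m c ->
  \sum_r w r * u r 0 * v r 0 = 0.
Proof.
move=> Hu Hv.
have : (v^T *m (W *m u)) 0 0 = 0.
  by rewrite Hv trmx_mul -mulmxA (mulmxA X^T) Hu mulmx0 mxE.
rewrite mxE => h; rewrite -[X in _ = X]h; apply: eq_bigr => r _.
by rewrite /W mul_diag_mx !mxE mulrC mulrA.
Qed.

Lemma Qf_split F c :
  Qf (F - X *m c) = Qf (F - X *m cstar F) + Qf (X *m (cstar F - c)).
Proof.
set u := F - X *m cstar F; set v := X *m (cstar F - c).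
have -> : F - X *m c = u + v.
  by rewrite /u /v mulmxBr addrA subrK.
have h := @cross0 u v (cstar F - c) (normal_eq F) (erefl v).
rewrite /Qf -big_split /=.
have -> : \sum_r w r * (u + v) r 0 ^+ 2 =
  \sum_r (w r * u r 0 ^+ 2 + w r * v r 0 ^+ 2) + 2 * \sum_r w r * u r 0 * v r 0.
  rewrite mulr_sumr -big_split /=; apply: eq_bigr => r _; rewrite !mxE; ring.
by rewrite h mulr0 addr0.
Qed.

Lemma Qf_eq0 c : Qf (X *m c) = 0 -> c = 0.
Proof.
move=> H.
have Hr : forall r, w r * (X *m c) r 0 ^+ 2 = 0.
  move=> r; apply: (psumr_eq0P _ H) => // s _.
  by rewrite mulr_ge0 // sqr_ge0.
have HW : W *m (X *m c) = 0.
  apply/matrixP => r k; rewrite ord1 /W mul_diag_mx.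
  move/eqP: (Hr r); rewrite mulf_eq0 => /orP[/eqP h |].
    by rewrite !mxE h mul0r.
  by rewrite expf_eq0 /= => /eqP h; rewrite mxE h mulr0 mxE.
have : G *m c = 0 by rewrite /G -!mulmxA HW mulmx0.
by move/(congr1 (mulmx (invmx G))); rewrite mulKmx // mulmx0.
Qed.

Lemma XTa : X^T *m amask = e0.
Proof. by rewrite /amask mulmxA mulmxA -/G mulKVmx. Qed.

Lemma amask_F F : (amask^T *m F) 0 0 = cstar F 0 0.
Proof.
have eF : F = X *m cstar F + (F - X *m cstar F) by rewrite addrC subrK.
rewrite {1}eF mulmxDr mxE.
have -> : amask^T *m (X *m cstar F) = e0^T *m cstar F.
  by rewrite mulmxA -XTa [(X^T *m amask)^T]trmx_mul trmxK.
have -> : (amask^T *m (F - X *m cstar F)) 0 0 = 0.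
  rewrite /amask !trmx_mul /W tr_diag_mx -!mulmxA (mulmxA X^T) normal_eq.
  by rewrite !mulmx0 mxE.
rewrite mxE big_ord_recl big1 ?addr0.
  by rewrite !mxE eqxx mul1r.
by move=> k _; rewrite !mxE mul0r.
Qed.

Lemma uniq_mask gam : X^T *m (W *m X *m gam) = e0 -> W *m X *m gam = amask.
Proof.
move=> H; rewrite /amask; congr (_ *m _).
by rewrite -H mulmxA mulmxA -/G mulKmx.
Qed.
End LS.
Arguments Qf {R n}. Arguments cstar {R n d}. Arguments amask {R n d}. Arguments e0 {R d}.
Arguments Qf_ge0 {R n w}. Arguments normal_eq {R n d X w}. Arguments cross0 {R n d X w}.
Arguments Qf_split {R n d X w}. Arguments Qf_eq0 {R n d X w}. Arguments XTa {R n d X w}.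
Arguments amask_F {R n d X w}. Arguments uniq_mask {R n d X w}.


Lemma e0T (R : realType) (d : nat) (c : 'cV[R]_d.+1) : ((@e0 R d)^T *m c) 0 0 = c 0 0.
Proof.
rewrite mxE big_ord_recl big1 ?addr0; first by rewrite !mxE eqxx mul1r.
by move=> k _; rewrite !mxE mul0r.
Qed.

Lemma shift2 (i : bool) (m j : int) : (m %% 2)%Z = (i:nat)%:Z ->
  2 * (j + ((m + (i:nat)%:Z) %/ 2)%Z) = 2 * j + (i:nat)%:Z + m.
Proof. by case: i => /= h; lia. Qed.

Section Main.
Variables (R : realType) (phi : R -> R) (lam : R) (d : nat).
Hypothesis phi_range : forall x : R, 0 <= x <= 1 -> 0 <= phi x <= 1.
Hypothesis Hinv : forall i : bool,
     ((Xmat lam d i)^T *m Wmat phi lam i *m Xmat lam d i) \in unitmx.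

Definition wv (i : bool) (r : 'I_(size (Mset lam i))) := wl phi lam (nth 0 (Mset lam i) r).

Lemma wv_ge0 i r : 0 <= wv i r.
Proof.
rewrite /wv /wl /omega; case: ifP => // h.
have : 0 <= `|(nth 0 (Mset lam i) r)%:~R / lam| <= 1 by rewrite normr_ge0 h.
by move/phi_range/andP => [].
Qed.

Lemma memM i (r : 'I_(size (Mset lam i))) :
  ((nth 0 (Mset lam i) r) %% 2)%Z = (i:nat)%:Z.
Proof.
have := mem_nth 0 (ltn_ord r); rewrite mem_filter /= => /andP[] /andP[] /eqP h _ _.
exact: h.
Qed.

Definition cq (q : {poly R}) : 'cV[R]_d.+1 := \col_(k < d.+1) q`_k.

Lemma XE i (q : {poly R}) (r : 'I_(size (Mset lam i))) : (size q <= d.+1)%N ->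
  (Xmat lam d i *m cq q) r 0 = q.[(nth 0 (Mset lam i) r)%:~R].
Proof.
move=> Hq; rewrite mxE (horner_coef_wide _ Hq); apply: eq_bigr => k _.
by rewrite !mxE mulrC.
Qed.

Definition Fcol i (f : int -> R) (j : int) : 'cV[R]_(size (Mset lam i)) :=
  \col_r f (j + ((nth 0 (Mset lam i) r + (i:nat)%:Z) %/ 2)%Z).

Lemma ruleE i (v : 'cV[R]_(size (Mset lam i))) f j :
  rule v f j = (v^T *m Fcol i f j) 0 0.
Proof. by rewrite /rule mxE; apply: eq_bigr => r _; rewrite !mxE. Qed.

Lemma objE i f j (q : {poly R}) : (size q <= d.+1)%N ->
  wlpr_obj phi lam i f j q = Qf (wv i) (Fcol i f j - Xmat lam d i *m cq q).
Proof.
move=> Hq; rewrite /wlpr_obj /Qf (big_nth 0) big_mkord; apply: eq_bigr => r _.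
rewrite -(XE i q r Hq) /wv; congr (_ * (_ ^+ 2)).
by rewrite !mxE.
Qed.

Definition pstar i f j : {poly R} :=
  \poly_(k < d.+1) cstar (Xmat lam d i) (wv i) (Fcol i f j) (inord k) 0.

Lemma cq_pstar i f j : cq (pstar i f j) = cstar (Xmat lam d i) (wv i) (Fcol i f j).
Proof.
apply/matrixP => k l; rewrite ord1 [cq _ _ _]mxE coef_poly ltn_ord.
by rewrite inord_val.
Qed.

Lemma part1 i f j :
  (exists p, wlpr_min phi lam d i f j p) /\
  (forall p, wlpr_min phi lam d i f j p ->
     rule (amask (Xmat lam d i) (wv i)) f j = p.[0]).
Proof.
have HG := Hinv i.
set F := Fcol i f j; set X := Xmat lam d i.
have Hs : (size (pstar i f j) <= d.+1)%N by apply: size_poly.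
split.
  exists (pstar i f j); split => // q Hq.
  rewrite !objE // cq_pstar (Qf_split HG F (cq q)) -/F.
  by rewrite lerDl Qf_ge0 // => r; apply: wv_ge0.
move=> p [Hp Hmin].
have := Hmin _ Hs; rewrite !objE // cq_pstar (Qf_split HG F (cq p)) -/F.
rewrite gerDl => Hle.
have H0 : Qf (wv i) (X *m (cstar X (wv i) F - cq p)) = 0.
  apply/eqP; rewrite eq_le Hle Qf_ge0 // => r; apply: wv_ge0.
have := Qf_eq0 (@wv_ge0 i) HG _ H0; move/eqP; rewrite subr_eq0 => /eqP Hc.
rewrite ruleE (amask_F HG) -/F Hc horner_coef0 mxE.
by [].
Qed.

Lemma subdivE b0 b1 f j (i : bool) :
  subdiv (lam := lam) b0 b1 f (2 * j + (i:nat)%:Z) =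
  if i then rule b1 f j else rule b0 f j.
Proof.
case: i; rewrite /subdiv.
  have -> : ((2 * j + (true:nat)%:Z) %% 2)%Z = 1 by lia.
  by have -> : ((2 * j + (true:nat)%:Z) %/ 2)%Z = j by lia.
have -> : ((2 * j + (false:nat)%:Z) %% 2)%Z = 0 by lia.
by have -> : ((2 * j + (false:nat)%:Z) %/ 2)%Z = j by lia.
Qed.

Lemma repro_fwd i (v : 'cV[R]_(size (Mset lam i))) :
  (Xmat lam d i)^T *m v = e0 ->
  forall p : {poly R}, (size p <= d.+1)%N -> forall j,
  rule v (fun j => p.[(2 * j)%:~R]) j = p.[(2 * j + (i:nat)%:Z)%:~R].
Proof.
move=> Hv p Hp j.
set c : R := (2 * j + (i:nat)%:Z)%:~R.
set q := p \Po ('X + c%:P).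
have Hq : (size q <= d.+1)%N by rewrite size_comp_poly2 // size_XaddC.
rewrite ruleE.
have -> : Fcol i (fun j => p.[(2 * j)%:~R]) j = Xmat lam d i *m cq q.
  apply/matrixP => r k; rewrite ord1 XE // mxE shift2 ?memM //.
  by rewrite /q horner_comp hornerD hornerX hornerC intrD addrC.
rewrite mulmxA -[v^T *m _]trmxK trmx_mul trmxK Hv e0T mxE.
by rewrite -horner_coef0 /q horner_comp hornerD hornerX hornerC add0r.
Qed.

Lemma repro_bwd i (v : 'cV[R]_(size (Mset lam i))) :
  (forall p : {poly R}, (size p <= d.+1)%N -> forall j,
   rule v (fun j => p.[(2 * j)%:~R]) j = p.[(2 * j + (i:nat)%:Z)%:~R]) ->
  (Xmat lam d i)^T *m v = e0.
Proof.
move=> H; apply/matrixP => k l; rewrite ord1.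
set p := ('X - (((i:nat)%:Z)%:~R : R)%:P) ^+ k.
have Hp : (size p <= d.+1)%N by rewrite size_exp_XsubC ltn_ord.
have := H p Hp 0; rewrite /rule.
rewrite /p horner_exp hornerXsubC mulr0 add0r subrr expr0n => Hs.
rewrite !mxE eqxx andbT -[RHS]Hs; apply: eq_bigr => r _.
rewrite !mxE horner_exp hornerXsubC shift2 ?memM // mulr0 add0r intrD.
by rewrite addrAC subrr add0r mulrC.
Qed.

End Main.

Theorem theorem3p4 (R : realType) (phi : R -> R) (lam : R) (d : nat)
  (phi_range : forall x : R, 0 <= x <= 1 -> 0 <= phi x <= 1)
  (phi_noninc : forall x y : R, 0 <= x -> x <= y -> y <= 1 -> phi y <= phi x)
  (phi0 : phi 0 = 1)
  (lam_pos : 0 < lam)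
  (lam_notnat : forall n : nat, lam != n%:R)
  (Hinv : forall i : bool,
     ((Xmat lam d i)^T *m Wmat phi lam i *m Xmat lam d i) \in unitmx) :
  exists (a0 : 'cV[R]_(size (Mset lam false))) (a1 : 'cV[R]_(size (Mset lam true))),
    (* the linear scheme with sub-masks a0, a1 is the WLPR scheme S_{d,w^lambda} *)
    (forall (f : int -> R) (j : int) (i : bool),
        (exists p, wlpr_min phi lam d i f j p) /\
        (forall p, wlpr_min phi lam d i f j p ->
           subdiv a0 a1 f (2 * j + (i : nat)%:Z) = p.[0])) /\
    (* it reproduces Pi_d and its sub-masks are of the form W^i X^i alpha^i *)
    reproduces d a0 a1 /\
    (exists alpha0 : 'cV[R]_d.+1, a0 = Wmat phi lam false *m Xmat lam d false *m alpha0) /\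
    (exists alpha1 : 'cV[R]_d.+1, a1 = Wmat phi lam true *m Xmat lam d true *m alpha1) /\
    (* uniqueness among linear schemes of this form *)
    (forall (b0 : 'cV[R]_(size (Mset lam false))) (b1 : 'cV[R]_(size (Mset lam true))),
        reproduces d b0 b1 ->
        (exists alpha0 : 'cV[R]_d.+1, b0 = Wmat phi lam false *m Xmat lam d false *m alpha0) ->
        (exists alpha1 : 'cV[R]_d.+1, b1 = Wmat phi lam true *m Xmat lam d true *m alpha1) ->
        b0 = a0 /\ b1 = a1).
Proof.
exists (amask (Xmat lam d false) (@wv R phi lam false)).
exists (amask (Xmat lam d true) (@wv R phi lam true)).
split.
  move=> f j i; have [h1 h2] := @part1 R phi lam d phi_range Hinv i f j.
  split => // p Hp; rewrite subdivE; case: i h1 h2 Hp => _ h2 Hp; exact: h2.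
split.
  move=> p Hp k.
  have [j [i ->]] : exists j (i : bool), k = 2 * j + (i:nat)%:Z.
    exists (k %/ 2)%Z; have : ((k %% 2)%Z = 0 \/ (k %% 2)%Z = 1) by lia.
    by case=> h; [exists false | exists true]; lia.
  rewrite subdivE; case: i.
    exact: (@repro_fwd R lam d true _ (XTa (Hinv true))).
  exact: (@repro_fwd R lam d false _ (XTa (Hinv false))).
split; first by eexists.
split; first by eexists.
move=> b0 b1 Hrep [g0 Hg0] [g1 Hg1]; split.
  rewrite Hg0; apply: uniq_mask; first exact: Hinv.
  rewrite -Hg0; apply: (@repro_bwd R lam d false) => p Hp j.
  by have := Hrep p Hp (2 * j + (false:nat)%:Z); rewrite subdivE.
rewrite Hg1; apply: uniq_mask; first exact: Hinv.
rewrite -Hg1; apply: (@repro_bwd R lam d true) => p Hp j.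
by have := Hrep p Hp (2 * j + (true:nat)%:Z); rewrite subdivE.
Qed.
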